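(* Let $X$ be a compact metric space and $f\colon X\to X$ a homeomorphism with the pseudo-orbit tracing property. If $f$ has a positively expansive measure, then $f$ has positive topological entropy.
   Context: Given $\delta\ge 0$, a bi-infinite sequence $(x_i)_{i\in\mathbb{Z}}$ in $X$ is a $\delta$-pseudo-orbit of $f$ if $d(f(x_i),x_{i+1})\le\delta$ for all $i\in\mathbb{Z}$; it is $\epsilon$-shadowed if there is $x\in X$ with $d(f^i(x),x_i)\le\epsilon$ for all $i\in\mathbb{Z}$. $f$ has the pseudo-orbit tracing property (POTP) if for every $\epsilon>0$ there is $\delta>0$ such that every $\delta$-pseudo-orbit can be $\epsilon$-shadowed. For $x\in X$ and $\delta\ge0$ let $\Phi_\delta(x)=\{y\in X: d(f^i(x),f^i(y))\le\delta \text{ for all } i\in\mathbb{N}=\{0,1,2,\dots\}\}$. A (not necessarily invariant) Borel probability measure $\mu$ on $X$ is positively expansive if there is $e>0$ (an expansivity constant) such that $\mu(\Phi_e(x))=0$ for every $x\in X$. *)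

(* Defs.v *)
From Stdlib Require Import Reals ZArith List.
Open Scope R_scope.

Definition is_metric {X : Type} (d : X -> X -> R) : Prop :=
  (forall x y, 0 <= d x y) /\
  (forall x y, d x y = 0 <-> x = y) /\
  (forall x y, d x y = d y x) /\
  (forall x y z, d x z <= d x y + d y z).

Definition is_open {X : Type} (d : X -> X -> R) (U : X -> Prop) : Prop :=
  forall x, U x -> exists r, 0 < r /\ forall y, d x y < r -> U y.

Definition is_compact {X : Type} (d : X -> X -> R) : Prop :=
  forall (I : Type) (U : I -> X -> Prop),
    (forall i, is_open d (U i)) ->
    (forall x, exists i, U i x) ->
    exists l : list I, forall x, exists i, In i l /\ U i x.

Definition continuous_map {X : Type} (d : X -> X -> R) (f : X -> X) : Prop :=
  forall x eps, 0 < eps -> exists delta, 0 < delta /\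
    forall y, d x y < delta -> d (f x) (f y) < eps.

Definition is_homeomorphism {X : Type} (d : X -> X -> R) (f : X -> X) : Prop :=
  continuous_map d f /\
  exists g : X -> X, (forall x, g (f x) = x) /\ (forall y, f (g y) = y) /\
    continuous_map d g.

Definition pseudo_orbit {X : Type} (d : X -> X -> R) (f : X -> X)
    (delta : R) (xs : Z -> X) : Prop :=
  forall i : Z, d (f (xs i)) (xs (i + 1)%Z) <= delta.

(* eps-shadowed: there is x with d(f^i x, x_i) <= eps for all i in Z.
   For a bijective f, (f^i x)_{i in Z} is exactly a bi-infinite f-orbit
   y with y (i+1) = f (y i) and y 0 = x. *)
Definition shadowed {X : Type} (d : X -> X -> R) (f : X -> X)
    (eps : R) (xs : Z -> X) : Prop :=
  exists y : Z -> X, (forall i : Z, y (i + 1)%Z = f (y i)) /\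
    (forall i : Z, d (y i) (xs i) <= eps).

Definition POTP {X : Type} (d : X -> X -> R) (f : X -> X) : Prop :=
  forall eps, 0 < eps -> exists delta, 0 < delta /\
    forall xs : Z -> X, pseudo_orbit d f delta xs -> shadowed d f eps xs.

Definition sigma_algebra {X : Type} (S : (X -> Prop) -> Prop) : Prop :=
  S (fun _ => True) /\
  (forall A, S A -> S (fun x => ~ A x)) /\
  (forall A : nat -> X -> Prop, (forall n, S (A n)) -> S (fun x => exists n, A n x)).

Definition borel {X : Type} (d : X -> X -> R) (A : X -> Prop) : Prop :=
  forall S : (X -> Prop) -> Prop, sigma_algebra S ->
    (forall U, is_open d U -> S U) -> S A.

(* mu is a (countably additive) Borel probability measure; its values on
   non-Borel sets are irrelevant. *)
Definition borel_probability {X : Type} (d : X -> X -> R)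
    (mu : (X -> Prop) -> R) : Prop :=
  (forall A, borel d A -> 0 <= mu A) /\
  mu (fun _ => True) = 1 /\
  (forall A : nat -> X -> Prop,
     (forall n, borel d (A n)) ->
     (forall n m x, n <> m -> A n x -> A m x -> False) ->
     infinite_sum (fun n => mu (A n)) (mu (fun x => exists n, A n x))).

Definition Phi {X : Type} (d : X -> X -> R) (f : X -> X) (delta : R) (x : X)
    : X -> Prop :=
  fun y => forall i : nat, d (Nat.iter i f x) (Nat.iter i f y) <= delta.

Definition positively_expansive_measure {X : Type} (d : X -> X -> R)
    (f : X -> X) (mu : (X -> Prop) -> R) : Prop :=
  exists e, 0 < e /\ forall x, mu (Phi d f e x) = 0.

Definition separated {X : Type} (d : X -> X -> R) (f : X -> X)
    (n : nat) (eps : R) (E : list X) : Prop :=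
  NoDup E /\
  forall x y, In x E -> In y E -> x <> y ->
    exists i, (i < n)%nat /\ eps < d (Nat.iter i f x) (Nat.iter i f y).

(* h_top(f) = lim_{eps->0} limsup_n (1/n) log s(n,eps), with s(n,eps) the
   maximal cardinality of an (n,eps)-separated set.  Since the limit in eps
   is a monotone supremum, h_top(f) > 0 unfolds to: for some eps > 0,
   limsup_n (1/n) log s(n,eps) > 0, i.e. there is c > 0 such that for
   infinitely many n there is an (n,eps)-separated set E with
   (1/n) log |E| >= c. *)
Definition positive_topological_entropy {X : Type} (d : X -> X -> R)
    (f : X -> X) : Prop :=
  exists eps, 0 < eps /\ exists c, 0 < c /\
    forall N : nat, exists n : nat, (N <= n)%nat /\ (0 < n)%nat /\
      exists E : list X, separated d f n eps E /\
        c <= ln (INR (length E)) / INR n.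

(* Main.v *)
Require Import Defs.
From Stdlib Require Import Reals ZArith List Lia Lra Classical ClassicalEpsilon FunctionalExtensionality PropExtensionality.
Open Scope R_scope.

Lemma pred_ext {X : Type} (A B : X -> Prop) : (forall x, A x <-> B x) -> A = B.
Proof. intro H. apply functional_extensionality; intro x. apply propositional_extensionality; auto. Qed.

Section Bor.
Context {X : Type} (d : X -> X -> R).

Lemma borel_open U : is_open d U -> borel d U.
Proof. intros HU S HS HO; auto. Qed.

Lemma borel_compl A : borel d A -> borel d (fun x => ~ A x).
Proof. intros HA S HS HO. pose proof (HA S HS HO). destruct HS as (_ & Hc & _). auto. Qed.

Lemma borel_union (A : nat -> X -> Prop) : (forall n, borel d (A n)) -> borel d (fun x => exists n, A n x).
Proof. intros HA S HS HO. assert (H : forall n, S (A n)) by (intro n; apply HA; auto).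
  destruct HS as (_ & _ & Hu). auto. Qed.

Lemma borel_True : borel d (fun _ => True).
Proof. apply borel_open. intros x _. exists 1; split; [lra| auto]. Qed.

Lemma borel_False : borel d (fun _ => False).
Proof. replace (fun _ : X => False) with (fun x : X => ~ True).
  apply borel_compl, borel_True. apply pred_ext; intuition. Qed.

Lemma borel_inter A B : borel d A -> borel d B -> borel d (fun x => A x /\ B x).
Proof. intros HA HB.
  set (C := fun n : nat => match n with O => fun x => ~ A x | _ => fun x => ~ B x end).
  replace (fun x => A x /\ B x) with (fun x => ~ exists n, C n x).
  - apply borel_compl, borel_union. intros [|n]; simpl; apply borel_compl; auto.
  - apply pred_ext. intro x; split.
    + intro H. split; apply NNPP; intro H'; apply H; [exists O | exists 1%nat]; exact H'.
    + intros [H1 H2] [[|n] Hn]; simpl in Hn; auto.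
Qed.
End Bor.

Section Meas.
Context {X : Type} (d : X -> X -> R) (mu : (X -> Prop) -> R) (Hmu : borel_probability d mu).

Lemma sum_const c n : sum_f_R0 (fun _ => c) n = INR (S n) * c.
Proof. induction n; simpl sum_f_R0. simpl; lra. rewrite IHn. rewrite !S_INR. lra. Qed.

Lemma mu_empty : mu (fun _ => False) = 0.
Proof. destruct Hmu as (_ & _ & Hadd).
  pose proof (Hadd (fun _ => fun _ => False) (fun _ => borel_False d) (fun _ _ _ _ H _ => H)) as Hs.
  cbv beta in Hs. replace (fun x : X => exists _ : nat, False) with (fun _ : X => False) in Hs by (apply pred_ext; firstorder).
  set (c := mu (fun _ => False)) in *.
  destruct (Req_dec c 0) as [|Hc]; auto. exfalso.
  destruct (Hs (Rabs c)) as [N HN]. apply Rabs_pos_lt; auto.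
  specialize (HN (S N) ltac:(lia)). rewrite sum_const in HN. unfold R_dist in HN.
  replace (INR (S (S N)) * c - c) with (INR (S N) * c) in HN by (rewrite (S_INR (S N)); ring). 
  rewrite Rabs_mult, Rabs_right in HN by (apply Rle_ge, pos_INR).
  assert (1 <= INR (S N)) by (rewrite S_INR; pose proof (pos_INR N); lra).
  pose proof (Rabs_pos c). nra.
Qed.

Lemma sum_two (a b : R) (u : nat -> R) : u O = a -> u 1%nat = b -> (forall n, (2 <= n)%nat -> u n = 0) -> infinite_sum u (a + b).
Proof. intros H0 H1 H2 eps He. exists 1%nat. intros n Hn. unfold R_dist.
  assert (E : forall m, (1 <= m)%nat -> sum_f_R0 u m = a + b).
  { induction m; intro Hm. lia. destruct m. cbn [sum_f_R0]; rewrite H0, H1; ring. change (sum_f_R0 u (S (S m))) with (sum_f_R0 u (S m) + u (S (S m))). rewrite H2 by lia. rewrite IHm by lia. ring. }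
  rewrite E by lia. rewrite Rminus_diag, Rabs_R0; auto. Qed.

Lemma mu_mono A B : borel d A -> borel d B -> (forall x, A x -> B x) -> mu A <= mu B.
Proof. intros HA HB Hsub. destruct Hmu as (Hpos & _ & Hadd).
  set (S := fun n : nat => match n with O => A | 1%nat => (fun x => B x /\ ~ A x) | _ => (fun _ => False) end).
  assert (HS : forall n, borel d (S n)).
  { intros [|[|n]]; simpl. auto. apply borel_inter; auto; apply borel_compl; auto. apply borel_False. }
  assert (Hd : forall n m x, n <> m -> S n x -> S m x -> False).
  { intros [|[|n]] [|[|m]] x Hnm; simpl; intuition. }
  pose proof (Hadd S HS Hd) as H1.
  replace (fun x => exists n, S n x) with B in H1.
  2:{ apply pred_ext; intro x; split.
      - intro Hx. destruct (classic (A x)). exists O; auto. exists 1%nat; simpl; auto.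
      - intros [[|[|n]] Hn]; simpl in Hn; intuition. }
  pose proof (sum_two (mu A) (mu (fun x => B x /\ ~ A x)) (fun n => mu (S n)) eq_refl eq_refl) as H2.
  assert (H3 : forall n, (2 <= n)%nat -> mu (S n) = 0).
  { intros [|[|n]] Hn; try lia. simpl. apply mu_empty. }
  specialize (H2 H3). rewrite (uniqueness_sum _ _ _ H1 H2).
  pose proof (Hpos _ (HS 1%nat)). simpl in H. lra.
Qed.

Lemma least_ex (P : nat -> Prop) : (exists n, P n) -> exists n, P n /\ forall k, (k < n)%nat -> ~ P k.
Proof. intros [n Hn]. revert Hn. induction n as [n IH] using lt_wf_ind. intro Hn.
  destruct (classic (exists k, (k < n)%nat /\ P k)) as [[k [Hk Pk]]|H].
  - apply (IH k Hk Pk).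
  - exists n; split; auto. intros k Hk Pk; apply H; eauto. Qed.

Lemma null_union (B : nat -> X -> Prop) : (forall n, borel d (B n)) -> (forall n, mu (B n) = 0) ->
  mu (fun x => exists n, B n x) = 0.
Proof. intros HB H0. destruct Hmu as (Hpos & _ & Hadd).
  set (D := fun n x => B n x /\ ~ exists k, (k < n)%nat /\ B k x).
  assert (HD : forall n, borel d (D n)).
  { intro n. apply borel_inter; auto. apply borel_compl, borel_union. intro k.
    destruct (lt_dec k n).
    - replace (fun x => (k < n)%nat /\ B k x) with (B k); auto. apply pred_ext; intuition.
    - replace (fun x => (k < n)%nat /\ B k x) with (fun _ : X => False). apply borel_False. apply pred_ext; intuition. }
  assert (Hd : forall n m x, n <> m -> D n x -> D m x -> False).
  { intros n m x Hnm [Hn Hn'] [Hm Hm']. destruct (lt_dec n m). apply Hm'; eauto. apply Hn'; exists m; split; auto; lia. }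
  pose proof (Hadd D HD Hd) as H1.
  replace (fun x => exists n, D n x) with (fun x => exists n, B n x) in H1.
  2:{ apply pred_ext; intro x; split.
      - intro Hx. destruct (least_ex (fun n => B n x) Hx) as [n [Hn Hl]]. exists n; split; auto.
        intros [k [Hk Bk]]. eapply Hl; eauto.
      - intros [n [Hn _]]; eauto. }
  assert (Hz : forall n, mu (D n) = 0).
  { intro n. pose proof (Hpos _ (HD n)). pose proof (mu_mono (D n) (B n) (HD n) (HB n) (fun x H => proj1 H)).
    rewrite H0 in H2. lra. }
  assert (H2 : infinite_sum (fun n => mu (D n)) 0).
  { intros eps He. exists O. intros n _. unfold R_dist.
    replace (sum_f_R0 (fun n => mu (D n)) n) with 0. rewrite Rminus_diag, Rabs_R0; auto.
    induction n; simpl; rewrite Hz; try rewrite <- IHn; lra. }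
  exact (uniqueness_sum _ _ _ H1 H2).
Qed.
End Meas.

Lemma step_divmod (L' i : Z) : (0 < L')%Z ->
  ((i mod L' + 1 < L') /\ (i+1) mod L' = i mod L' + 1 /\ (i+1)/L' = i/L')%Z \/
  (i mod L' = L' - 1 /\ (i+1) mod L' = 0 /\ (i+1)/L' = i/L' + 1)%Z.
Proof. intro HL. pose proof (Z.div_mod i L' ltac:(lia)) as E. pose proof (Z.mod_pos_bound i L' HL) as B.
  remember (i / L')%Z as q. remember (i mod L')%Z as r.
  destruct (Z_lt_dec (r + 1) L') as [H|H].
  - left. split; auto. split.
    + symmetry. apply (Z.mod_unique _ _ q). lia. lia.
    + symmetry. apply (Z.div_unique _ _ _ (r+1)). lia. lia.
  - right. split. lia. split.
    + symmetry. apply (Z.mod_unique _ _ (q+1)). lia. nia.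
    + symmetry. apply (Z.div_unique _ _ _ 0). lia. nia.
Qed.

Lemma divmod_at (L m t : nat) : (t < L)%nat ->
  (Z.of_nat (m * L + t) / Z.of_nat L = Z.of_nat m)%Z /\ (Z.of_nat (m * L + t) mod Z.of_nat L = Z.of_nat t)%Z.
Proof. intro H. split.
  - symmetry. apply (Z.div_unique _ _ _ (Z.of_nat t)). lia. rewrite Nat2Z.inj_add, Nat2Z.inj_mul. ring.
  - symmetry. apply (Z.mod_unique _ _ (Z.of_nat m)). lia. rewrite Nat2Z.inj_add, Nat2Z.inj_mul. ring.
Qed.

Lemma iter_orbit {X : Type} (f : X -> X) (y : Z -> X) : (forall i, y (i+1)%Z = f (y i)) ->
  forall n, Nat.iter n f (y 0%Z) = y (Z.of_nat n).
Proof. intros Hy n. induction n. reflexivity. simpl Nat.iter. rewrite IHn, <- Hy. f_equal. lia. Qed.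

Lemma diff_index (b1 : list bool) : forall b2, length b1 = length b2 -> b1 <> b2 ->
  exists m, (m < length b1)%nat /\ nth m b1 false <> nth m b2 false.
Proof. induction b1 as [|x b1 IH]; intros [|y b2] Hl Hne; simpl in *; try lia. congruence.
  destruct (Bool.bool_dec x y) as [->|Hxy].
  - destruct (IH b2 ltac:(lia) ltac:(congruence)) as [m [Hm Hn]]. exists (S m). split; auto; lia.
  - exists O. split; auto; lia.
Qed.

Fixpoint allbits (k : nat) : list (list bool) :=
  match k with O => nil :: nil | S k => map (cons true) (allbits k) ++ map (cons false) (allbits k) end.

Lemma allbits_len k : length (allbits k) = (2 ^ k)%nat.
Proof. induction k; simpl; auto. rewrite length_app, !length_map, IHk. lia. Qed.

Lemma allbits_in k b : In b (allbits k) -> length b = k.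
Proof. revert b; induction k; simpl; intros b H. destruct H as [<-|[]]; auto.
  apply in_app_or in H. destruct H as [H|H]; apply in_map_iff in H; destruct H as [b' [<- H]]; simpl; rewrite IHk; auto. Qed.

Lemma nodup_map_inj {A B : Type} (g : A -> B) (l : list A) : (forall a b, g a = g b -> a = b) -> NoDup l -> NoDup (map g l).
Proof. intros Hg Hl. apply NoDup_map_NoDup_ForallPairs; auto. intros a b _ _; apply Hg. Qed.

Lemma allbits_nodup k : NoDup (allbits k).
Proof. induction k; simpl. constructor; auto; constructor. apply NoDup_app.
  - apply nodup_map_inj; auto. congruence.
  - apply nodup_map_inj; auto. congruence.
  - intros a Ha Hb. apply in_map_iff in Ha, Hb. destruct Ha as [? [<- _]]. destruct Hb as [? [? _]]. discriminate.
Qed.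

Section Ent.
Context {X : Type} (d : X -> X -> R) (f : X -> X) (Hmet : is_metric d).

Lemma entropy_from_loops eps delta
  (Hsh : forall xs, pseudo_orbit d f delta xs -> shadowed d f eps xs)
  (L : nat) (u v : nat -> X) (HL : (0 < L)%nat)
  (H1 : forall j, (S j < L)%nat -> d (f (u j)) (u (S j)) <= delta /\ d (f (v j)) (v (S j)) <= delta)
  (H2 : d (f (u (L-1)%nat)) (u O) <= delta /\ d (f (u (L-1)%nat)) (v O) <= delta /\
        d (f (v (L-1)%nat)) (u O) <= delta /\ d (f (v (L-1)%nat)) (v O) <= delta)
  t (Ht : (t < L)%nat) theta (Hth : theta < d (u t) (v t)) (Hpos : 0 < theta - 2 * eps) :
  positive_topological_entropy d f.
Proof.
  destruct Hmet as (Hd0 & Hdeq & Hsym & Htri).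
  set (L' := Z.of_nat L).
  set (xs := fun (b : list bool) (i : Z) =>
    if nth (Z.to_nat (i / L')) b false then u (Z.to_nat (i mod L')) else v (Z.to_nat (i mod L'))).
  assert (Hpo : forall b, pseudo_orbit d f delta (xs b)).
  { intros b i. unfold xs. destruct (step_divmod L' i ltac:(unfold L'; lia)) as [[Hr [Hm Hdv]]|[Hr [Hm Hdv]]];
    rewrite Hm, Hdv; pose proof (Z.mod_pos_bound i L' ltac:(unfold L'; lia)).
    - replace (Z.to_nat (i mod L' + 1)) with (S (Z.to_nat (i mod L'))) by lia.
      assert (S (Z.to_nat (i mod L')) < L)%nat by (unfold L' in *; lia).
      destruct (nth _ b false); apply H1; auto.
    - replace (Z.to_nat (i mod L')) with (L - 1)%nat by (unfold L' in *; lia). simpl Z.to_nat.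
      destruct H2 as (Ha & Hb & Hc & Hd').
      destruct (nth (Z.to_nat (i / L')) b false), (nth (Z.to_nat (i / L' + 1)) b false); auto. }
  assert (Hall : forall b, {y : Z -> X | (forall i, y (i+1)%Z = f (y i)) /\ forall i, d (y i) (xs b i) <= eps}).
  { intro b. apply constructive_indefinite_description. apply Hsh, Hpo. }
  set (Y := fun b => proj1_sig (Hall b)).
  assert (HY1 : forall b i, Y b (i+1)%Z = f (Y b i)) by (intro b; exact (proj1 (proj2_sig (Hall b)))).
  assert (HY2 : forall b i, d (Y b i) (xs b i) <= eps) by (intro b; exact (proj2 (proj2_sig (Hall b)))).
  assert (Hxs : forall b m, xs b (Z.of_nat (m * L + t)) = if nth m b false then u t else v t).
  { intros b m. unfold xs. destruct (divmod_at L m t Ht) as [E1 E2]. unfold L'. rewrite E1, E2, !Nat2Z.id. reflexivity. }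
  assert (Hsep : forall b1 b2, length b1 = length b2 -> b1 <> b2 ->
     exists i, (i < length b1 * L)%nat /\ theta - 2 * eps < d (Nat.iter i f (Y b1 0%Z)) (Nat.iter i f (Y b2 0%Z))).
  { intros b1 b2 Hl Hne. destruct (diff_index b1 b2 Hl Hne) as [m [Hm Hn]].
    exists (m * L + t)%nat. split. nia.
    rewrite !(iter_orbit f _ (HY1 _)).
    set (i := Z.of_nat (m * L + t)).
    assert (Huv : theta < d (xs b1 i) (xs b2 i)).
    { unfold i; rewrite !Hxs. destruct (nth m b1 false), (nth m b2 false); try congruence; auto. }
    pose proof (HY2 b1 i). pose proof (HY2 b2 i).
    pose proof (Htri (xs b1 i) (Y b1 i) (xs b2 i)). pose proof (Htri (Y b1 i) (Y b2 i) (xs b2 i)).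
    rewrite (Hsym (xs b1 i) (Y b1 i)) in *. lra. }
  exists (theta - 2 * eps). split; auto.
  assert (Hln2 : 0 < ln 2) by (rewrite <- ln_1; apply ln_increasing; lra).
  exists (ln 2 / INR L). split. apply Rdiv_lt_0_compat; auto. apply lt_0_INR; auto.
  intro N. exists (S N * L)%nat. split. nia. split. nia.
  exists (map (fun b => Y b 0%Z) (allbits (S N))). split.
  - split.
    + apply NoDup_map_NoDup_ForallPairs; [|apply allbits_nodup].
      intros a b Ha Hb Hab. destruct (list_eq_dec Bool.bool_dec a b) as [|Hne]; auto. exfalso.
      destruct (Hsep a b ltac:(rewrite (allbits_in _ _ Ha), (allbits_in _ _ Hb); auto) Hne) as [i [_ Hi]].
      rewrite Hab in Hi. rewrite (proj2 (Hdeq _ _) eq_refl) in Hi. lra.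
    + intros x y Hx Hy Hxy. apply in_map_iff in Hx, Hy. destruct Hx as [a [<- Ha]]. destruct Hy as [b [<- Hb]].
      assert (a <> b) by (intro; subst; auto).
      destruct (Hsep a b ltac:(rewrite (allbits_in _ _ Ha), (allbits_in _ _ Hb); auto) H) as [i [Hi Hi']].
      exists i. split; auto. rewrite (allbits_in _ _ Ha) in Hi. auto.
  - rewrite length_map, allbits_len, pow_INR, ln_pow by (simpl; lra). rewrite mult_INR.
    replace (INR 2) with 2 by (simpl; ring). apply Req_le. field.
    split; apply not_0_INR; lia.
Qed.
End Ent.

Fixpoint dig (m k i : nat) : nat := match i with O => k mod m | S i => dig m (k / m) i end.

Lemma dig_exists m (Hm : (0 < m)%nat) T : forall g : nat -> nat, (forall i, (i <= T)%nat -> (g i < m)%nat) ->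
  exists k, forall i, (i <= T)%nat -> dig m k i = g i.
Proof. induction T; intros g Hg.
  - exists (g O). intros i Hi. replace i with O by lia. simpl. apply Nat.mod_small. apply Hg; lia.
  - destruct (IHT (fun i => g (S i))) as [k' Hk']. intros i Hi; apply Hg; lia.
    exists (g O + k' * m)%nat. intros [|i] Hi; simpl.
    + rewrite Nat.Div0.mod_add. apply Nat.mod_small, Hg; lia.
    + rewrite Nat.div_add by lia. rewrite Nat.div_small by (apply Hg; lia). simpl. apply Hk'. lia.
Qed.

Lemma pigeon {X : Type} (l : list X) (P : X -> nat -> Prop) :
  (forall j, exists c, In c l /\ P c j) -> exists c, In c l /\ forall N, exists j, (N <= j)%nat /\ P c j.
Proof. intro H. apply NNPP. intro Hn.
  assert (Hb : forall l', (forall c, In c l' -> In c l) -> exists N, forall c, In c l' -> forall j, (N <= j)%nat -> ~ P c j).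
  { induction l' as [|c l' IH]; intro Hs.
    - exists O. intros c [].
    - destruct IH as [N1 HN1]. intros c' Hc'; apply Hs; right; auto.
      assert (Hc : exists N, forall j, (N <= j)%nat -> ~ P c j).
      { apply NNPP. intro H2. apply Hn. exists c. split. apply Hs; left; auto.
        intro N. apply NNPP; intro H3. apply H2. exists N. intros j Hj Pj. apply H3; eauto. }
      destruct Hc as [N2 HN2]. exists (Nat.max N1 N2). intros c' [<-|Hc'] j Hj.
      + apply HN2; lia.
      + apply HN1; auto; lia. }
  destruct (Hb l (fun c H => H)) as [N HN]. destruct (H N) as [c [Hc Pc]]. eapply HN; eauto.
Qed.

Lemma cont_iter {X : Type} (d : X -> X -> R) (f : X -> X) : continuous_map d f -> forall n, continuous_map d (Nat.iter n f).
Proof. intros Hf n. induction n; intros x eps He.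
  - exists eps; split; auto.
  - destruct (Hf (Nat.iter n f x) eps He) as [d1 [Hd1 H1]].
    destruct (IHn x d1 Hd1) as [d2 [Hd2 H2]]. exists d2; split; auto. intros y Hy. simpl. apply H1, H2, Hy.
Qed.

Lemma borel_Phi {X : Type} (d : X -> X -> R) (f : X -> X) (Hmet : is_metric d) (Hf : continuous_map d f) e x :
  borel d (Phi d f e x).
Proof. destruct Hmet as (Hd0 & Hdeq & Hsym & Htri).
  replace (Phi d f e x) with (fun y => ~ exists i, ~ d (Nat.iter i f x) (Nat.iter i f y) <= e).
  2:{ apply pred_ext. intro y; unfold Phi; split.
      - intros H i. apply NNPP; intro H'; apply H; eauto.
      - intros H [i Hi]; auto. }
  apply borel_compl, borel_union. intro i. apply borel_open. intros y Hy.
  apply Rnot_le_lt in Hy. set (a := Nat.iter i f x) in *.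
  destruct (cont_iter d f Hf i y (d a (Nat.iter i f y) - e) ltac:(lra)) as [r [Hr H]].
  exists r; split; auto. intros z Hz. specialize (H z Hz). pose proof (Htri a (Nat.iter i f z) (Nat.iter i f y)).
  rewrite (Hsym (Nat.iter i f z)) in H0. lra.
Qed.

Theorem corollary1 (X : Type) (d : X -> X -> R) (f : X -> X)
  (Hmetric : is_metric d) (Hcompact : is_compact d)
  (Hhomeo : is_homeomorphism d f) (Hpotp : POTP d f)
  (Hmu : exists mu : (X -> Prop) -> R,
           borel_probability d mu /\ positively_expansive_measure d f mu) :
  positive_topological_entropy d f.
Proof.
  destruct Hmu as [mu [Hbp [e [He Hexp]]]].
  pose proof Hmetric as (Hd0 & Hdeq & Hsym & Htri).
  assert (Hdz : forall z, d z z = 0) by (intro z; apply Hdeq; auto).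
  set (eps := e / 8).
  destruct (Hpotp eps ltac:(unfold eps; lra)) as [delta [Hdel Hsh]].
  set (s := Rmin delta (e / 4) / 2).
  assert (Hs : 0 < s) by (unfold s, Rmin; destruct Rle_dec; lra).
  assert (Hs1 : 2 * s <= delta) by (unfold s; pose proof (Rmin_l delta (e/4)); lra).
  assert (Hs2 : 2 * s <= e / 4) by (unfold s; pose proof (Rmin_r delta (e/4)); lra).
  set (theta := e / 2).
  destruct (classic (exists L (u v : nat -> X), (0 < L)%nat /\
    (forall j, (S j < L)%nat -> d (f (u j)) (u (S j)) <= delta /\ d (f (v j)) (v (S j)) <= delta) /\
    (d (f (u (L-1)%nat)) (u O) <= delta /\ d (f (u (L-1)%nat)) (v O) <= delta /\
     d (f (v (L-1)%nat)) (u O) <= delta /\ d (f (v (L-1)%nat)) (v O) <= delta) /\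
    exists t, (t < L)%nat /\ theta < d (u t) (v t))) as [HB|HnB].
  { destruct HB as [L [u [v [HL [H1 [H2 [t [Ht Hth]]]]]]]].
    apply (entropy_from_loops d f Hmetric eps delta Hsh L u v HL H1 H2 t Ht theta Hth). unfold theta, eps; lra. }
  exfalso.
  pose proof Hbp as (Hpos & H1 & Hadd).
  destruct (classic (exists x : X, True)) as [[x0 _]|Hne].
  2:{ replace (fun _ : X => True) with (fun _ : X => False) in H1 by (apply pred_ext; intro x; split; [intros []|intro; apply Hne; eauto]).
      rewrite (mu_empty d mu Hbp) in H1. lra. }
  destruct (Hcompact X (fun c y => d c y < s)) as [l Hl].
  { intros c y Hy. exists (s - d c y). split. lra. intros z Hz. pose proof (Htri c y z). lra. }
  { intro x. exists x. rewrite Hdz; auto. }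
  set (m := length l).
  assert (Hm : (0 < m)%nat).
  { destruct (Hl x0) as [c [Hc _]]. unfold m. destruct l; simpl in *; [contradiction|lia]. }
  set (w := fun k i => nth (dig m k i) l x0).
  set (A := fun T k y => (forall i, (i <= T)%nat -> d (w k i) (Nat.iter i f y) < s) /\
                         (forall N, exists j, (N <= j)%nat /\ d (w k T) (Nat.iter j f y) < s)).
  assert (close : forall c z1 z2, d c z1 < s -> d c z2 < s -> d z1 z2 < 2 * s).
  { intros c z1 z2 Ha Hb. pose proof (Htri z1 c z2). rewrite (Hsym z1 c) in H. lra. }
  assert (C1 : forall y, exists T k, A T k y).
  { intro y. destruct (pigeon l (fun c j => d c (Nat.iter j f y) < s)) as [c [Hc Hinf]].
    { intro j. apply Hl. }
    destruct (Hinf O) as [T [_ HT]].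
    destruct (In_nth l c x0 Hc) as [n [Hn Hnth]].
    assert (Hch : forall i, {n' | (n' < m)%nat /\ d (nth n' l x0) (Nat.iter i f y) < s}).
    { intro i. apply constructive_indefinite_description. destruct (Hl (Nat.iter i f y)) as [c' [Hc' Hd']].
      destruct (In_nth l c' x0 Hc') as [n' [Hn' Hnth']]. exists n'. rewrite Hnth'. auto. }
    set (g := fun i => if Nat.eqb i T then n else proj1_sig (Hch i)).
    destruct (dig_exists m Hm T g) as [k Hk].
    { intros i _. unfold g. destruct (Nat.eqb i T). auto. apply (proj2_sig (Hch i)). }
    exists T, k. split.
    - intros i Hi. unfold w. rewrite Hk by auto. unfold g. destruct (Nat.eqb_spec i T).
      + subst i. rewrite Hnth. auto.
      + apply (proj2_sig (Hch i)).
    - intro N. unfold w. rewrite Hk by auto. unfold g. rewrite Nat.eqb_refl, Hnth. auto. }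
  assert (C2 : forall T k x y, A T k x -> A T k y -> Phi d f e x y).
  { intros T k x y [Ax1 Ax2] [Ay1 Ay2] i.
    destruct (le_lt_dec i T) as [Hi|Hi].
    - pose proof (close _ _ _ (Ax1 i Hi) (Ay1 i Hi)). lra.
    - set (c := w k T) in *.
      destruct (Ax2 (S i)) as [jx [Hjx Hdx]]. destruct (Ay2 (S i)) as [jy [Hjy Hdy]].
      set (p := Nat.iter T f x). set (q := Nat.iter T f y).
      assert (Hp : d c p < s) by apply (Ax1 T (le_n T)).
      assert (Hq : d c q < s) by apply (Ay1 T (le_n T)).
      set (a := (jx - T)%nat). set (b := (jy - T)%nat). set (t0 := (i - T)%nat).
      assert (Hit : forall n z, Nat.iter n f (Nat.iter T f z) = Nat.iter (n + T) f z) by (intros; symmetry; apply Nat.iter_add).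
      assert (Hap : d c (Nat.iter a f p) < s) by (unfold p; rewrite Hit; replace (a + T)%nat with jx by lia; auto).
      assert (Hbq : d c (Nat.iter b f q) < s) by (unfold q; rewrite Hit; replace (b + T)%nat with jy by lia; auto).
      destruct (Rle_or_lt (d (Nat.iter i f x) (Nat.iter i f y)) theta) as [Hle|Hlt].
      { unfold theta in Hle; lra. }
      exfalso. apply HnB.
      set (u := fun j => if Nat.ltb j a then Nat.iter j f p else Nat.iter (j - a) f q).
      set (v := fun j => if Nat.ltb j b then Nat.iter j f q else Nat.iter (j - b) f p).
      assert (Hpred : forall n z, (0 < n)%nat -> f (Nat.iter (n - 1) f z) = Nat.iter n f z).
      { intros [|n] z Hn. lia. simpl. rewrite Nat.sub_0_r. reflexivity. }
      assert (Hfa : f (Nat.iter (a - 1) f p) = Nat.iter a f p) by (apply Hpred; lia).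
      assert (Hfb : f (Nat.iter (b - 1) f q) = Nat.iter b f q) by (apply Hpred; lia).
      exists (a + b)%nat, u, v. split. lia. split; [|split; [|exists t0; split]].
      + intros j Hj. unfold u, v. split.
        * destruct (Nat.ltb_spec j a), (Nat.ltb_spec (S j) a).
          -- rewrite Hdz; lra.
          -- replace a with (S j) in * by lia. replace (S j - S j)%nat with O by lia. simpl.
             pose proof (close _ _ _ Hap Hq). simpl in H2. lra.
          -- lia.
          -- replace (S j - a)%nat with (S (j - a)) by lia. simpl. rewrite Hdz; lra.
        * destruct (Nat.ltb_spec j b), (Nat.ltb_spec (S j) b).
          -- rewrite Hdz; lra.
          -- replace b with (S j) in * by lia. replace (S j - S j)%nat with O by lia. simpl.
             pose proof (close _ _ _ Hbq Hp). simpl in H2. lra.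
          -- lia.
          -- replace (S j - b)%nat with (S (j - b)) by lia. simpl. rewrite Hdz; lra.
      + unfold u, v.
        destruct (Nat.ltb_spec (a + b - 1) a); [lia|]. destruct (Nat.ltb_spec (a + b - 1) b); [lia|].
        destruct (Nat.ltb_spec 0 a); [|lia]. destruct (Nat.ltb_spec 0 b); [|lia]. simpl.
        replace (a + b - 1 - a)%nat with (b - 1)%nat by lia. replace (a + b - 1 - b)%nat with (a - 1)%nat by lia.
        rewrite Hfa, Hfb.
        pose proof (close _ _ _ Hbq Hp). pose proof (close _ _ _ Hbq Hq).
        pose proof (close _ _ _ Hap Hp). pose proof (close _ _ _ Hap Hq). repeat split; lra.
      + lia.
      + unfold u, v. destruct (Nat.ltb_spec t0 a); [|lia]. destruct (Nat.ltb_spec t0 b); [|lia].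
        unfold p, q. rewrite !Hit. replace (t0 + T)%nat with i by lia. auto. }
  assert (C3 : forall T k, exists B, borel d B /\ mu B = 0 /\ forall y, A T k y -> B y).
  { intros T k. destruct (classic (exists x, A T k x)) as [[x Hx]|Hn].
    - exists (Phi d f e x). split. apply borel_Phi; auto. apply (proj1 Hhomeo). split. auto.
      intros y Hy. apply (C2 T k); auto.
    - exists (fun _ => False). split. apply borel_False. split. apply (mu_empty d mu Hbp).
      intros y Hy; apply Hn; eauto. }
  assert (C3' : forall T k, {B | borel d B /\ mu B = 0 /\ forall y, A T k y -> B y})
    by (intros; apply constructive_indefinite_description, C3).
  set (P := fun T k => proj1_sig (C3' T k)).
  assert (HPb : forall T k, borel d (P T k)) by (intros; apply (proj2_sig (C3' T k))).
  assert (HPm : forall T k, mu (P T k) = 0) by (intros; apply (proj2_sig (C3' T k))).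
  assert (HPA : forall T k y, A T k y -> P T k y) by (intros T k; apply (proj2_sig (C3' T k))).
  set (Q := fun T y => exists k, P T k y).
  assert (HQb : forall T, borel d (Q T)) by (intro T; apply borel_union; auto).
  assert (HQm : forall T, mu (Q T) = 0) by (intro T; apply (null_union d mu Hbp); auto).
  pose proof (null_union d mu Hbp Q HQb HQm) as HR.
  replace (fun x => exists n, Q n x) with (fun _ : X => True) in HR.
  - lra.
  - apply pred_ext. intro y; split; auto. intros _. destruct (C1 y) as [T [k Hk]]. exists T, k. auto.
Qed.
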